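(* Let $N_p\in\mathbb{N}$, $A,B\in\mathbb{C}^{N_p\times N_p}$ with $A^\dagger=A$, $B^T=B$, let $\Omega=\operatorname{diag}[\Omega_i]_{i=1}^{N_p}$ with all $\Omega_i>0$, and let $X,Y\in\mathbb{C}^{N_p\times N_p}$ be such that $W=\begin{bmatrix} X & Y^*\\ Y & X^*\end{bmatrix}$ satisfies $$\eta\begin{bmatrix} A & B\\ B^* & A^*\end{bmatrix}=W\begin{bmatrix}+\Omega & 0\\ 0&-\Omega\end{bmatrix}W^{-1},\qquad W^{-1}=\eta W^\dagger\eta,\qquad \eta=\begin{bmatrix}+I&0\\0&-I\end{bmatrix}.$$ Let $x_i=X\mathbf e_i$, $y_i=Y\mathbf e_i$, let $\widetilde\Omega_1,\dots,\widetilde\Omega_{N_p}>0$, $\widetilde\Omega=\operatorname{diag}[\widetilde\Omega_i]$, and define $$\widetilde A=A+\sum_{i=1}^{N_p}(\widetilde\Omega_i-\Omega_i)\big[x_ix_i^\dagger+(y_iy_i^\dagger)^*\big],\qquad \widetilde B=B+\sum_{i=1}^{N_p}(\widetilde\Omega_i-\Omega_i)\big[-x_iy_i^\dagger-(x_iy_i^\dagger)^T\big].$$ Then $$\eta\begin{bmatrix} \widetilde A & \widetilde B\\ \widetilde B^* & \widetilde A^*\end{bmatrix}=W\begin{bmatrix}+\widetilde\Omega & 0\\ 0&-\widetilde\Omega\end{bmatrix}W^{-1},$$ i.e. the modified QRPA matrix has the same eigenvector matrix $W$ (still satisfying $W^{-1}=\eta W^\dagger\eta$) with eigenfrequencies $\widetilde\Omega_i$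 in place of $\Omega_i$.
   Context: $A^\dagger$, $A^T$, $A^*$ denote conjugate transpose, transpose and entrywise complex conjugate; $\mathbf e_i$ is the $i$-th standard basis vector of $\mathbb{C}^{N_p}$; $\operatorname{diag}[\cdot]$ is the diagonal matrix with the given diagonal entries. The matrix $\eta\begin{bmatrix} A & B\\ B^* & A^*\end{bmatrix}$ is the QRPA matrix. *)

(* Defs.v *)
(* Complex numbers are modelled as R[i] = complex R
   for an arbitrary R : realType (so R[i] is the field of complex numbers). *)
From HB Require Import structures.
From mathcomp Require Import all_boot all_order all_algebra.
From mathcomp Require Import complex.
From mathcomp Require Import reals.
Set Implicit Arguments. Unset Strict Implicit. Unset Printing Implicit Defensive.
Import Order.TTheory GRing.Theory Num.Theory.
Local Open Scope ring_scope.

Definition ccmx (C : numClosedFieldType) (m n : nat) (A : 'M[C]_(m, n)) : 'M[C]_(m, n) :=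
  map_mx (fun z => z^*) A.

Definition daggermx (C : numClosedFieldType) (m n : nat) (A : 'M[C]_(m, n)) : 'M[C]_(n, m) :=
  (ccmx A)^T.

Definition etamx (C : numClosedFieldType) (n : nat) : 'M[C]_(n + n) :=
  block_mx 1%:M 0 0 (- 1%:M).

Definition qrpa_blocks (C : numClosedFieldType) (n : nat) (A B : 'M[C]_n) : 'M[C]_(n + n) :=
  block_mx A B (ccmx B) (ccmx A).

Definition Wmx (C : numClosedFieldType) (n : nat) (X Y : 'M[C]_n) : 'M[C]_(n + n) :=
  block_mx X (ccmx Y) Y (ccmx X).

Definition diagmx (C : numClosedFieldType) (n : nat) (om : 'I_n -> C) : 'M[C]_n :=
  diag_mx (\row_i om i).

Definition freqmx (C : numClosedFieldType) (n : nat) (om : 'I_n -> C) : 'M[C]_(n + n) :=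
  block_mx (diagmx om) 0 0 (- diagmx om).
Arguments etamx {C} n.

(* Main.v *)
Require Import Defs.
From HB Require Import structures.
From mathcomp Require Import all_boot all_order all_algebra.
From mathcomp Require Import complex.
From mathcomp Require Import reals.
From mathcomp Require Import ring.
Import Order.TTheory GRing.Theory Num.Theory.
Local Open Scope ring_scope.

Section H.
Variable C : numClosedFieldType.

Lemma cjM (x y : C) : (x * y)^* = x^* * y^*.
Proof. exact: rmorphM. Qed.

Lemma ccmxD m n (A B : 'M[C]_(m, n)) : ccmx (A + B) = ccmx A + ccmx B.
Proof. by apply/matrixP=> i j; rewrite !mxE rmorphD. Qed.
Lemma ccmxN m n (A : 'M[C]_(m, n)) : ccmx (- A) = - ccmx A.
Proof. by apply/matrixP=> i j; rewrite !mxE rmorphN. Qed.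
Lemma ccmxM m n p (A : 'M[C]_(m, n)) (B : 'M[C]_(n, p)) :
  ccmx (A *m B) = ccmx A *m ccmx B.
Proof.
apply/matrixP=> i j; rewrite !mxE rmorph_sum; apply: eq_bigr => k _.
by rewrite !mxE rmorphM.
Qed.
Lemma ccmxK m n (A : 'M[C]_(m, n)) : ccmx (ccmx A) = A.
Proof. by apply/matrixP=> i j; rewrite !mxE conjCK. Qed.
Lemma ccmx_tr m n (A : 'M[C]_(m, n)) : ccmx (A^T) = (ccmx A)^T.
Proof. by apply/matrixP=> i j; rewrite !mxE. Qed.
Lemma ccmx_diag n (d : 'I_n -> C) : (forall i, (d i)^* = d i) ->
  ccmx (diagmx d) = diagmx d.
Proof.
move=> hd; apply/matrixP=> i j; rewrite !mxE rmorphMn.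
by congr (_ *+ _); apply: hd.
Qed.

Lemma sum1 n (X Z : 'M[C]_n) (d : 'I_n -> C) :
  \sum_i d i *: (col i X *m daggermx (col i Z)) = X *m diagmx d *m daggermx Z.
Proof.
apply/matrixP=> a b; rewrite /diagmx mul_mx_diag summxE !mxE.
apply: eq_bigr => k _; rewrite !mxE big_ord1 !mxE; ring.
Qed.

Lemma sum2 n (Y : 'M[C]_n) (d : 'I_n -> C) :
  \sum_i d i *: ccmx (col i Y *m daggermx (col i Y)) = ccmx Y *m diagmx d *m Y^T.
Proof.
apply/matrixP=> a b; rewrite /diagmx mul_mx_diag summxE !mxE.
apply: eq_bigr => k _; rewrite !mxE big_ord1 !mxE cjM conjCK; ring.
Qed.

Lemma sum3 n (X Y : 'M[C]_n) (d : 'I_n -> C) :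
  \sum_i d i *: (col i X *m daggermx (col i Y))^T = ccmx Y *m diagmx d *m X^T.
Proof.
apply/matrixP=> a b; rewrite /diagmx mul_mx_diag summxE !mxE.
apply: eq_bigr => k _; rewrite !mxE big_ord1 !mxE; ring.
Qed.

Lemma ccmx_block m1 m2 n1 n2 (a : 'M[C]_(m1, n1)) (b : 'M[C]_(m1, n2))
  (c : 'M[C]_(m2, n1)) (e : 'M[C]_(m2, n2)) :
  ccmx (block_mx a b c e) = block_mx (ccmx a) (ccmx b) (ccmx c) (ccmx e).
Proof. exact: map_block_mx. Qed.

Lemma key n (X Y : 'M[C]_n) (d : 'I_n -> C) : (forall i, (d i)^* = d i) ->
  let D := diagmx d in
  let P := X *m D *m daggermx X + ccmx Y *m D *m Y^T in
  let Q := X *m D *m daggermx Y + ccmx Y *m D *m X^T in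
  etamx n *m block_mx P (- Q) (- ccmx Q) (ccmx P) =
  Wmx X Y *m freqmx d *m (etamx n *m daggermx (Wmx X Y) *m etamx n).
Proof.
move=> hd D P Q.
rewrite /etamx /Wmx /freqmx /daggermx ccmx_block tr_block_mx !ccmxK.
rewrite /P /Q !(ccmxD, ccmxM, ccmx_diag, ccmxK, ccmx_tr) // /daggermx.
rewrite -/D !mulmx_block.
rewrite !(mul1mx, mul0mx, mulmx0, mulmx1, addr0, add0r).
rewrite !(mulNmx, mulmxN, opprK, mul1mx, mulmx1) ?mulmxA.
congr block_mx => //.
- by rewrite opprD.
- by rewrite addrC.
- by rewrite opprD addrC.

Qed.

End H.


Theorem mainTheorem3 (R : realType) (n : nat) (A B X Y : 'M[R[i]]_n)
  (om omt : 'I_n -> R[i]) :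
  daggermx A = A ->
  B^T = B ->
  (forall i, 0 < om i) ->
  Wmx X Y \in unitmx ->
  invmx (Wmx X Y) = etamx n *m daggermx (Wmx X Y) *m etamx n ->
  etamx n *m qrpa_blocks A B = Wmx X Y *m freqmx om *m invmx (Wmx X Y) ->
  (forall i, 0 < omt i) ->
  let At := A + \sum_(i < n) (omt i - om i) *:
              (col i X *m daggermx (col i X) + ccmx (col i Y *m daggermx (col i Y))) in
  let Bt := B + \sum_(i < n) (omt i - om i) *:
              (- (col i X *m daggermx (col i Y)) - (col i X *m daggermx (col i Y))^T) in
  etamx n *m qrpa_blocks At Bt = Wmx X Y *m freqmx omt *m invmx (Wmx X Y).
Proof.
move=> hA hB hom hU hinv heig homt At Bt.
set d := fun i => omt i - om i.
have hd : forall i, (d i)^* = d i.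
  move=> i; apply: conj_Creal; rewrite /d rpredB //.
    exact: gtr0_real.
  exact: gtr0_real.
set D := diagmx d.
set P := X *m D *m daggermx X + ccmx Y *m D *m Y^T.
set Q := X *m D *m daggermx Y + ccmx Y *m D *m X^T.
have eAt : At = A + P.
  rewrite /At /P -sum1 -sum2 -big_split /=; congr (_ + _).
  by apply: eq_bigr => i _; rewrite scalerDr.
have eBt : Bt = B - Q.
  rewrite /Bt /Q -sum1 -sum3 -big_split /= -sumrN; congr (_ + _).
  by apply: eq_bigr => i _; rewrite scalerDr scalerN scalerN opprD.
have eF : freqmx omt = freqmx om + freqmx d.
  rewrite /freqmx add_block_mx !addr0 -opprD; congr (block_mx _ _ _ (- _));
  by apply/matrixP=> a b; rewrite !mxE /d -mulrnDl; congr (_ *+ _); rewrite addrC subrK.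
rewrite eF mulmxDr mulmxDl -heig.
rewrite eAt eBt.
have eQ : qrpa_blocks (A + P) (B - Q) = qrpa_blocks A B + block_mx P (- Q) (- ccmx Q) (ccmx P).
  by rewrite /qrpa_blocks add_block_mx ccmxD ccmxD ccmxN.
rewrite eQ mulmxDr; congr (_ + _).
rewrite hinv; exact: (@key _ n X Y d hd).
Qed.
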